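(* An ES combination operator $\nabla$ satisfies (ESF1)–(ESF7) and (ESF8W) if and only if there exists a unique quasifaithful assignment $\Phi\mapsto\succeq_\Phi$ such that $[\![B(\nabla(\Phi,E))]\!]=\max([\![B(E)]\!],\succeq_\Phi)$ for every profile $\Phi$ and every $E\in\mathcal E$.
   Context: Setting: an epistemic space $(\mathcal E,B,\mathcal L_{\mathcal P})$ ($\mathcal E$ nonempty, $B:\mathcal E\to\mathcal L_{\mathcal P}$ with image modulo equivalence exactly the consistent formulas over the finite variable set $\mathcal P$; $\mathcal W_{\mathcal P}$ valuations, $[\![\phi]\!]$ models); agents form a well-ordered set $\mathcal S$; a society is a nonempty finite $N\subseteq\mathcal S$; an $N$-profile is $\Phi:N\to\mathcal E$, $E_i=\Phi(i)$, identified with $E_i$ when $N=\{i\}$; profiles on $\{i_1<\dots<i_n\}$ and $\{j_1<\dots<j_m\}$ are equivalent ($\equiv$) if $n=m$ and entries coincide position-wise; $\Phi\upharpoonright_M$ restriction; partitions $\{N_1,N_2\}$ have nonempty disjoint parts. An ES combination operator maps (profile, $E$) to $\nabla(\Phi,E)\in\mathcal E$. Postulates: (ESF1) $B(\nabla(\Phi,E))\vdash B(E)$; (ESF2) if $\Phi\equiv\Phi'$ and $B(E)\equiv B(E')$ then $B(\nabla(\Phi,E))\equiv B(\nabla(\Phi',E'))$; (ESF3) if $B(E)\equiv B(E')\wedge B(E'')$ then $B(\nabla(\Phi,E'))\wedge B(E'')\vdash B(\nabla(\Phi,E))$; (ESF4) if moreover $B(\nabla(\Phi,E'))\wedge B(E'')\nvdash\bot$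 then $B(\nabla(\Phi,E))\vdash B(\nabla(\Phi,E'))\wedge B(E'')$; (ESF5) if $E_j\ne E_k$ there is $E'$ with $B(\nabla(E_j,E'))\not\equiv B(\nabla(E_k,E'))$; (ESF6) if $\bigwedge_{i\in N}B(E_i)\wedge B(E)\nvdash\bot$ then $B(\nabla(\Phi,E))\equiv\bigwedge_{i\in N}B(E_i)\wedge B(E)$; (ESF7) $B(\nabla(\Phi\upharpoonright_{N_1},E))\wedge B(\nabla(\Phi\upharpoonright_{N_2},E))\vdash B(\nabla(\Phi,E))$; (ESF8W) if $B(\nabla(\Phi\upharpoonright_{N_1},E))\wedge B(\nabla(\Phi\upharpoonright_{N_2},E))\nvdash\bot$ then $B(\nabla(\Phi,E))\vdash B(\nabla(\Phi\upharpoonright_{N_1},E))\vee B(\nabla(\Phi\upharpoonright_{N_2},E))$. An assignment maps each profile to a total preorder $\succeq_\Phi$ on $\mathcal W_{\mathcal P}$; it is basic if $\Phi\equiv\Psi$ implies $\succeq_\Phi=\succeq_\Psi$; it is quasifaithful if basic and: (1) $E_j\ne E_k$ implies $\succeq_{E_j}\ne\succeq_{E_k}$; (2) if $\bigwedge_{i\in N}B(E_i)\nvdash\bot$ then $[\![\bigwedge_{i\in N}B(E_i)]\!]=\max(\succeq_\Phi)$; (3) $w\succeq_{\Phi\upharpoonright_{N_1}}w'$ and $w\succeq_{\Phi\upharpoonright_{N_2}}w'$ imply $w\succeq_\Phi w'$; (4') $w\succ_{\Phi\upharpoonright_{N_1}}w'$ and $w\succ_{\Phi\upharpoonright_{N_2}}w'$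 imply $w\succ_\Phi w'$. $\max(C,\succeq)=\{c\in C:c\succeq x\ \forall x\in C\}$. *)

(* Defs.v *)
From mathcomp Require Import all_boot.
Set Implicit Arguments. Unset Strict Implicit. Unset Printing Implicit Defensive.

Inductive form (P : Type) : Type :=
| FVar of P
| FTop
| FBot
| FNeg of form P
| FAnd of form P & form P
| FOr of form P & form P.
Arguments FTop {P}. Arguments FBot {P}.

Definition valuation (P : finType) := {ffun P -> bool}.

Fixpoint sat (P : finType) (w : valuation P) (f : form P) : bool :=
  match f with
  | FVar p => w p
  | FTop => true
  | FBot => false
  | FNeg g => ~~ sat w g
  | FAnd g h => sat w g && sat w h
  | FOr g h => sat w g || sat w h
  end.

Definition models (P : finType) (f : form P) : {set valuation P} :=
  [set w | sat w f].

Definition entails (P : finType) (f g : form P) : Prop := models f \subset models g.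
Definition fequiv (P : finType) (f g : form P) : Prop := models f = models g.
Definition consistent (P : finType) (f : form P) : Prop := models f != set0.

Definition maxset (T : finType) (C : {set T}) (r : rel T) : {set T} :=
  [set c in C | [forall x in C, r c x]].

Definition strict (T : Type) (r : rel T) : rel T := fun x y => r x y && ~~ r y x.

Section Space.
Variables (P : finType) (S : Type) (lt : rel S) (E : Type) (B : E -> form P).

Definition epistemic_space : Prop :=
  inhabited E /\ (forall e, consistent (B e)) /\
  (forall f : form P, consistent f -> exists e, fequiv (B e) f).

Definition well_order : Prop :=
  irreflexive lt /\ transitive lt /\ (forall x y : S, x <> y -> lt x y || lt y x) /\
  well_founded (fun x y => lt x y).

(* A profile Phi : N -> E on a nonempty finite society N is represented
   canonically as the list of pairs (i, E_i), i ranging over N in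
   increasing order. *)
Definition profile := seq (S * E).
Definition is_profile (Phi : profile) : Prop :=
  sorted (fun a b => lt a.1 b.1) Phi /\ ~~ nilp Phi.

Definition prof_equiv (Phi Psi : profile) : Prop := map snd Phi = map snd Psi.

Definition single (i : S) (e : E) : profile := [:: (i, e)].

(* A partition {N1, N2} of the society of Phi is described by a mask m:
   N1 = mask m Phi, N2 = mask (~~ m) Phi, both nonempty. *)
Definition is_partition (Phi : profile) (m : bitseq) : Prop :=
  size m = size Phi /\ 0 < size (mask m Phi) /\ 0 < size (mask (map negb m) Phi).
Definition part1 (Phi : profile) (m : bitseq) : profile := mask m Phi.
Definition part2 (Phi : profile) (m : bitseq) : profile := mask (map negb m) Phi.

Definition bigB (Phi : profile) : form P := foldr (fun p acc => FAnd (B p.2) acc) FTop Phi.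

Variable nab : profile -> E -> E.

Definition ESF1 := forall Phi e, is_profile Phi -> entails (B (nab Phi e)) (B e).
Definition ESF2 := forall Phi Phi' e e', is_profile Phi -> is_profile Phi' ->
  prof_equiv Phi Phi' -> fequiv (B e) (B e') -> fequiv (B (nab Phi e)) (B (nab Phi' e')).
Definition ESF3 := forall Phi e e' e'', is_profile Phi ->
  fequiv (B e) (FAnd (B e') (B e'')) ->
  entails (FAnd (B (nab Phi e')) (B e'')) (B (nab Phi e)).
Definition ESF4 := forall Phi e e' e'', is_profile Phi ->
  fequiv (B e) (FAnd (B e') (B e'')) ->
  consistent (FAnd (B (nab Phi e')) (B e'')) ->
  entails (B (nab Phi e)) (FAnd (B (nab Phi e')) (B e'')).
Definition ESF5 := forall (j k : S) (ej ek : E), ej <> ek ->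
  exists e', ~ fequiv (B (nab (single j ej) e')) (B (nab (single k ek) e')).
Definition ESF6 := forall Phi e, is_profile Phi ->
  consistent (FAnd (bigB Phi) (B e)) -> fequiv (B (nab Phi e)) (FAnd (bigB Phi) (B e)).
Definition ESF7 := forall Phi e m, is_profile Phi -> is_partition Phi m ->
  entails (FAnd (B (nab (part1 Phi m) e)) (B (nab (part2 Phi m) e))) (B (nab Phi e)).
Definition ESF8W := forall Phi e m, is_profile Phi -> is_partition Phi m ->
  consistent (FAnd (B (nab (part1 Phi m) e)) (B (nab (part2 Phi m) e))) ->
  entails (B (nab Phi e)) (FOr (B (nab (part1 Phi m) e)) (B (nab (part2 Phi m) e))).

Definition ESF_all : Prop :=
  ESF1 /\ ESF2 /\ ESF3 /\ ESF4 /\ ESF5 /\ ESF6 /\ ESF7 /\ ESF8W.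

Definition assignment := profile -> rel (valuation P).

Definition is_assignment (a : assignment) : Prop :=
  forall Phi, is_profile Phi -> total (a Phi) /\ transitive (a Phi).

Definition basic (a : assignment) : Prop :=
  is_assignment a /\
  forall Phi Psi, is_profile Phi -> is_profile Psi -> prof_equiv Phi Psi -> a Phi =2 a Psi.

Definition quasifaithful (a : assignment) : Prop :=
  basic a /\
  (forall (j k : S) (ej ek : E), ej <> ek -> ~ (a (single j ej) =2 a (single k ek))) /\
  (forall Phi, is_profile Phi -> consistent (bigB Phi) ->
     models (bigB Phi) = maxset [set: valuation P] (a Phi)) /\
  (forall Phi m w w', is_profile Phi -> is_partition Phi m ->
     a (part1 Phi m) w w' -> a (part2 Phi m) w w' -> a Phi w w') /\
  (forall Phi m w w', is_profile Phi -> is_partition Phi m ->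
     strict (a (part1 Phi m)) w w' -> strict (a (part2 Phi m)) w w' ->
     strict (a Phi) w w').

Definition represents (a : assignment) : Prop :=
  forall Phi e, is_profile Phi -> models (B (nab Phi e)) = maxset (models (B e)) (a Phi).

End Space.

(* Main.v *)
Require Import Defs.
From mathcomp Require Import all_boot.
Require Import Defs.
From Stdlib Require ClassicalEpsilon.
Set Implicit Arguments. Unset Strict Implicit. Unset Printing Implicit Defensive.

Lemma models_and (P : finType) (f g : form P) :
  models (FAnd f g) = models f :&: models g.
Proof. by apply/setP => w; rewrite !inE. Qed.

Lemma models_or (P : finType) (f g : form P) :
  models (FOr f g) = models f :|: models g.
Proof. by apply/setP => w; rewrite !inE. Qed.

Definition lit (P : finType) (w : valuation P) : form P :=
  foldr (fun p acc => FAnd (if w p then FVar p else FNeg (FVar p)) acc) FTop (enum P).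

Lemma sat_lit (P : finType) (w v : valuation P) : sat v (lit w) = (v == w).
Proof.
have H : forall s, sat v (foldr (fun p acc => FAnd (if w p then FVar p else FNeg (FVar p)) acc) FTop s)
   = all (fun p => v p == w p) s.
  elim=> [|p s IH] //=; rewrite IH; congr (_ && _).
  by case: (w p) => /=; case: (v p).
rewrite /lit H; apply/idP/eqP => [/allP Hp|->]; last by apply/allP => p _.
by apply/ffunP => p; apply/eqP; apply: Hp; rewrite mem_enum.
Qed.

Definition setf (P : finType) (X : {set valuation P}) : form P :=
  foldr (fun w acc => FOr (lit w) acc) FBot (enum X).

Lemma models_setf (P : finType) (X : {set valuation P}) : models (setf X) = X.
Proof.
have H : forall (v : valuation P) (s : seq (valuation P)), sat v (foldr (fun w acc => FOr (lit w) acc) FBot s) = (v \in s).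
  move=> v; elim=> [|w s IH] //=; by rewrite IH sat_lit in_cons.
by apply/setP => v; rewrite inE /setf H mem_enum.
Qed.

Lemma in_maxset (T : finType) (C : {set T}) (r : rel T) c :
  reflect (c \in C /\ forall x : T, x \in C -> r c x) (c \in maxset C r).
Proof.
rewrite inE; apply: (iffP andP) => [[H1 /forall_inP H2]|[H1 H2]]; split => //.
by apply/forall_inP.
Qed.

Lemma maxset_eq2 (T : finType) (C : {set T}) (r1 r2 : rel T) :
  r1 =2 r2 -> maxset C r1 = maxset C r2.
Proof.
move=> H; apply/setP => c; rewrite !inE; congr (_ && _).
by apply: eq_forallb => x; rewrite H.
Qed.

Lemma mem_max2 (T : finType) (r : rel T) w w' :
  r w w -> (w \in maxset [set w; w'] r) = r w w'.
Proof.
move=> rww; apply/in_maxset/idP => [[_ H]|H]; first by apply: H; rewrite set22.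
split; first exact: set21.
by move=> x; rewrite !inE => /orP[]/eqP->.
Qed.

Lemma exists_E (P : finType) (E : Type) (B : E -> form P) :
  epistemic_space B -> forall X : {set valuation P}, exists e, X != set0 -> models (B e) = X.
Proof.
case=> [[e0] [hc hs]] X.
case: (boolP (X == set0)) => [_|nz]; first by exists e0.
have /hs [e He] : consistent (setf X) by rewrite /consistent models_setf.
by exists e => _; rewrite He models_setf.
Qed.

Lemma part_profile (S E : Type) (lt : rel S) (Phi : profile S E) m :
  well_order lt -> is_profile lt Phi -> is_partition Phi m ->
  is_profile lt (part1 Phi m) /\ is_profile lt (part2 Phi m).
Proof.
case=> _ [tr _] [so _] [_ [h1 h2]].
have trp : transitive (fun a b : S * E => lt a.1 b.1).
  by move=> y x z; apply: tr.
split; split; rewrite ?/nilp -?lt0n //; exact: sorted_mask.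
Qed.

Lemma single_profile (S E : Type) (lt : rel S) i (e : E) : is_profile lt (single i e).
Proof. by split. Qed.

Lemma sound (P : finType) (S : Type) (lt : rel S) (E : Type) (B : E -> form P)
  (nab : profile S E -> E -> E) (a : assignment P S E) :
  well_order lt -> epistemic_space B ->
  quasifaithful lt B a -> represents lt B nab a -> ESF_all lt B nab.
Proof.
move=> hS hE [[hasg hbas] [q1 [q2 [q3 q4]]]] rep.
have tot : forall Phi, is_profile lt Phi -> total (a Phi) by move=> Phi /hasg [].
have tr : forall Phi, is_profile lt Phi -> transitive (a Phi) by move=> Phi /hasg [].
have refl : forall Phi w, is_profile lt Phi -> a Phi w w.
  by move=> Phi w /tot /(_ w w); rewrite orbb.
split.
  move=> Phi e hP; rewrite /entails rep //; apply/subsetP => c /in_maxset [] //.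
split.
  move=> Phi Phi' e e' hP hP' heq hf; rewrite /fequiv !rep // hf.
  exact: maxset_eq2 (hbas _ _ hP hP' heq).
split.
  move=> Phi e e' e'' hP; rewrite /fequiv /entails !models_and !rep // => he.
  apply/subsetP => c; rewrite inE => /andP [/in_maxset [c1 c2] c3].
  apply/in_maxset; split; first by rewrite he inE c1 c3.
  by move=> x; rewrite he inE => /andP [x1 _]; apply: c2.
split.
  move=> Phi e e' e'' hP; rewrite /fequiv /consistent /entails !models_and !rep // => he.
  case/set0Pn => d; rewrite inE => /andP [/in_maxset [d1 d2] d3].
  apply/subsetP => c /in_maxset []; rewrite he inE => /andP [c1 c3] c2.
  rewrite inE c3 andbT; apply/in_maxset; split => // x x1.
  apply: (tr _ hP d); last exact: d2.
  by apply: c2; rewrite inE d1 d3.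
split.
  move=> j k ej ek hne.
  have hneq := q1 j k ej ek hne.
  case: (boolP [exists w, [exists w', a (single j ej) w w' != a (single k ek) w w']]); last first.
    move/existsPn => H; exfalso; apply: hneq => w w'.
    by move: (H w) => /existsPn /(_ w') /negPn /eqP.
  case/existsP => w /existsP [w' hw].
  have [e' He'] := exists_E hE [set w; w'].
  exists e'; rewrite /fequiv !rep ?He' //; last by apply/set0Pn; exists w; exact: set21.
  move=> Hm; move: hw.
  rewrite -(mem_max2 w' (refl _ w (single_profile lt j ej))).
  rewrite -(mem_max2 w' (refl _ w (single_profile lt k ek))) Hm.
  by rewrite eqxx.
split.
  move=> Phi e hP; rewrite /consistent /fequiv models_and rep // => hc.
  case/set0Pn: (hc) => d; rewrite inE => /andP [d1 d2].
  have hb : consistent (bigB B Phi) by apply/set0Pn; exists d.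
  have Hq := q2 _ hP hb.
  apply/setP => c; apply/in_maxset/idP.
    case=> c1 c2; rewrite inE c1 andbT Hq; apply/in_maxset; split => // x _.
    move: d1; rewrite Hq => /in_maxset [_ dx].
    by apply: (tr _ hP d); [apply: c2 | apply: dx].
  rewrite inE Hq => /andP [/in_maxset [_ c2] c1]; split => // x _; exact: c2.
split.
  move=> Phi e m hP hm; have [p1 p2] := part_profile hS hP hm.
  rewrite /entails models_and !rep //; apply/subsetP => c.
  rewrite inE => /andP [/in_maxset [c1 c2] /in_maxset [_ c3]].
  apply/in_maxset; split => // x xe; apply: (q3 _ m) => //; [exact: c2 | exact: c3].
move=> Phi e m hP hm; have [p1 p2] := part_profile hS hP hm.
rewrite /consistent /entails models_and models_or !rep //.
case/set0Pn => d; rewrite inE => /andP [/in_maxset [d1 d2] /in_maxset [_ d3]].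
apply/subsetP => c /in_maxset [c1 c2]; rewrite inE.
case: (boolP (c \in maxset _ _)) => //= n1.
apply/negPn/negP => n2.
have key : forall Q, is_profile lt Q -> (forall x, x \in models (B e) -> a Q d x) ->
    c \notin maxset (models (B e)) (a Q) -> strict (a Q) d c.
  move=> Q hQ dQ nc.
  have [x xe nx] : exists2 x, x \in models (B e) & ~~ a Q c x.
    move: nc; rewrite inE c1 /= => /forall_inPn [x xe nx]; by exists x.
  have xc : a Q x c by move: (tot _ hQ c x); rewrite (negbTE nx).
  apply/andP; split; first exact: (tr _ hQ x _ _ (dQ _ xe) xc).
  by apply/negP => cd; move/negP: nx; apply; apply: (tr _ hQ d) => //; apply: dQ.
have := q4 _ _ _ _ hP hm (key _ p1 d2 n1) (key _ p2 d3 n2).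
by case/andP => _; rewrite c2.
Qed.

Lemma complete (P : finType) (S : Type) (lt : rel S) (E : Type) (B : E -> form P)
  (nab : profile S E -> E -> E) :
  well_order lt -> epistemic_space B -> ESF_all lt B nab ->
  exists a : assignment P S E,
    (quasifaithful lt B a /\ represents lt B nab a) /\
    (forall a' : assignment P S E, quasifaithful lt B a' -> represents lt B nab a' ->
       forall Phi, is_profile lt Phi -> a' Phi =2 a Phi).
Proof.
move=> hS hE [f1 [f2 [f3 [f4 [f5 [f6 [f7 f8]]]]]]].
pose g X := proj1_sig (ClassicalEpsilon.constructive_indefinite_description _ (exists_E hE X)).
have hg : forall X, X != set0 -> models (B (g X)) = X.
  move=> X; exact: (proj2_sig (ClassicalEpsilon.constructive_indefinite_description _ (exists_E hE X))).
have hg2 : forall w w' : valuation P, models (B (g [set w; w'])) = [set w; w'].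
  by move=> w w'; apply: hg; apply/set0Pn; exists w; exact: set21.
pose M Phi e := models (B (nab Phi e)).
pose a : assignment P S E := fun Phi w w' => w \in M Phi (g [set w; w']).
have cons : forall e, models (B e) != set0 by move: (hE) => [_ [hc _]].
have sub : forall Phi e, is_profile lt Phi -> M Phi e \subset models (B e).
  by move=> Phi e hP; apply: f1.
have L : forall Phi e e2, is_profile lt Phi -> models (B e2) \subset models (B e) ->
    M Phi e :&: models (B e2) != set0 -> M Phi e2 = M Phi e :&: models (B e2).
  move=> Phi e e2 hP hs hn.
  have he : fequiv (B e2) (FAnd (B e) (B e2)) by rewrite /fequiv models_and; apply/esym/setIidPr.
  apply/eqP; rewrite eqEsubset; apply/andP; split.
    by rewrite -models_and; apply: f4 => //; rewrite /consistent models_and.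
  by rewrite -models_and; apply: f3.
have K : forall Phi e c d, is_profile lt Phi -> d \in M Phi e -> c \in models (B e) ->
    a Phi c d -> c \in M Phi e.
  move=> Phi e c d hP hd hc; rewrite /a (L Phi e) ?hg2.
  - by rewrite inE => /andP [].
  - by [].
  - apply/subsetP => x /set2P [] ->; [exact: hc | exact: (subsetP (sub Phi e hP) _ hd)].
  - by apply/set0Pn; exists d; rewrite in_setI hd set22.
have Rep : forall Phi e, is_profile lt Phi -> M Phi e = maxset (models (B e)) (a Phi).
  move=> Phi e hP; apply/setP => c; apply/idP/in_maxset.
    move=> hc; have c1 := subsetP (sub _ _ hP) _ hc; split => // x xe.
    rewrite /a (L Phi e) ?hg2 //.
    - by rewrite in_setI hc set21.
    - apply/subsetP => y /set2P [] ->; [exact: c1 | exact: xe].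
    - by apply/set0Pn; exists c; rewrite in_setI hc set21.
  case=> c1 c2; have /set0Pn [d hd] : M Phi e != set0 by exact: cons.
  apply: (K _ _ _ d) => //; apply: c2; exact: (subsetP (sub _ _ hP)).
have PI : forall Phi e w w', is_profile lt Phi -> models (B e) = [set w; w'] ->
    a Phi w w' = (w \in M Phi e).
  move=> Phi e w w' hP he; rewrite /a /M.
  by rewrite (f2 Phi Phi (g [set w; w']) e) // /fequiv hg2 he.
have tot : forall Phi, is_profile lt Phi -> total (a Phi).
  move=> Phi hP c x.
  have /set0Pn [d hd] : M Phi (g [set c; x]) != set0 by exact: cons.
  have := subsetP (sub _ _ hP) _ hd; rewrite hg2 !inE => /orP [] /eqP dE; subst d.
    by rewrite /a hd.
  rewrite (PI Phi (g [set c; x]) x c hP); first by rewrite hd orbT.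
  by rewrite hg2 setUC.
have tr : forall Phi, is_profile lt Phi -> transitive (a Phi).
  move=> Phi hP w2 w1 w3 h12 h23.
  pose e3 := g [set w1; w2; w3].
  have he3 : models (B e3) = [set w1; w2; w3].
    by apply: hg; apply/set0Pn; exists w1; rewrite !inE eqxx.
  have /set0Pn [d hd] : M Phi e3 != set0 by exact: cons.
  have h1 : w1 \in M Phi e3.
    have h2 : w2 \in M Phi e3 -> w1 \in M Phi e3.
      by move=> H; apply: (K _ _ _ w2) => //; rewrite he3 !inE eqxx.
    have hd' := subsetP (sub _ _ hP) _ hd; rewrite he3 !inE in hd'.
    case/orP: hd' => [/orP [] | ] /eqP dE; rewrite dE in hd.
    - exact: hd.
    - exact: h2.
    by apply: h2; apply: (K _ _ _ w3) => //; rewrite he3 !inE eqxx orbT.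
  move: h1; rewrite Rep // => /in_maxset [_]; apply; rewrite he3 !inE eqxx !orbT.
  done.
have asg : is_assignment lt a by move=> Phi hP; split; [exact: tot | exact: tr].
have refl : forall Phi w, is_profile lt Phi -> a Phi w w.
  by move=> Phi w /tot /(_ w w); rewrite orbb.
exists a; split; last first.
  move=> a' [[asg' _] _] rep' Phi hP w w'.
  have refl' : a' Phi w w by move: (asg' _ hP) => [/(_ w w)]; rewrite orbb.
  by rewrite /a /M rep' // hg2 mem_max2.
split; last by move=> Phi e hP; exact: Rep.
split.
  split => // Phi Psi hP hQ heq w w'.
  by rewrite /a /M (f2 Phi Psi (g [set w; w']) (g [set w; w'])).
split.
  move=> j k ej ek hne hq.
  have [e' He'] := f5 j k ej ek hne; apply: He'.
  rewrite /fequiv -/(M _ _) -/(M _ _) !Rep ?single_profile //.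
  exact: maxset_eq2.
split.
  move=> Phi hP hb.
  have hT : models (B (g [set: valuation P])) = [set: valuation P].
    by apply: hg; apply/set0Pn; exists [ffun=> true].
  rewrite -hT -Rep //.
  rewrite /M (f6 Phi (g [set: valuation P])) // ?models_and ?hT ?setIT //.
  by rewrite /consistent models_and hT setIT.
split.
  move=> Phi m w w' hP hm h1 h2; rewrite /a.
  apply: (subsetP (f7 _ _ _ hP hm)); rewrite models_and inE; exact/andP.
move=> Phi m w w' hP hm /andP [h1 n1] /andP [h2 n2].
have [p1 p2] := part_profile hS hP hm.
have hw : w \in M Phi (g [set w; w']).
  apply: (subsetP (f7 _ _ _ hP hm)); rewrite models_and inE; exact/andP.
apply/andP; split => //.
have E1 : models (B (g [set w; w'])) = [set w'; w] by rewrite hg2 setUC.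
rewrite (PI Phi (g [set w; w']) w' w hP E1).
rewrite (PI _ (g [set w; w']) w' w p1 E1) in n1.
rewrite (PI _ (g [set w; w']) w' w p2 E1) in n2.
apply/negP => hw'.
have : w' \in M (part1 Phi m) (g [set w; w']) :|: M (part2 Phi m) (g [set w; w']).
  rewrite /M -models_or; apply: (subsetP (f8 _ _ _ hP hm _)) => //.
  by rewrite /consistent models_and; apply/set0Pn; exists w; rewrite in_setI; apply/andP; split; [exact: h1 | exact: h2].
by rewrite inE (negbTE n1) (negbTE n2).
Qed.

Theorem theorem3 (P : finType) (S : Type) (lt : rel S) (E : Type) (B : E -> form P)
  (hS : well_order lt) (hE : epistemic_space B)
  (nab : profile S E -> E -> E) :
  ESF_all lt B nab <->
  exists a : assignment P S E,
    (quasifaithful lt B a /\ represents lt B nab a) /\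
    (forall a' : assignment P S E, quasifaithful lt B a' -> represents lt B nab a' ->
       forall Phi, is_profile lt Phi -> a' Phi =2 a Phi).
Proof.
split; first exact: complete.
by case=> a [[hq hr] _]; exact: (sound hS hE hq hr).
Qed.
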